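(* Let $n$ be a parameter and let $p=p(n)$ be a positive integer with $p=O(2^{n^k})$ for some constant $k$. Then for any polynomial $s(n)$ there is a polynomial $t(n)$ such that whenever $q$ is an integer with $q\geq t(n)\,p$, for the superpositions $\boldsymbol\beta=\mathrm{FT}_p(\boldsymbol\alpha)$ and $\boldsymbol\gamma=\mathrm{FT}_q(\boldsymbol\alpha)$ of an input superposition $\boldsymbol\alpha$ we have $$\|\mathcal D_{\boldsymbol\beta}-\mathcal D_{\boldsymbol\gamma}\|_1=\sum_{i=0}^{p-1}\left|\mathcal D_{\boldsymbol\beta}(i)-\mathcal D_{\boldsymbol\gamma}(i)\right|\leq \frac{1}{s(n)}.$$
   Context: Write $[p]=\{0,1,\dots,p-1\}$ and $\omega_N=e^{2\pi i/N}$. An input superposition is a unit vector $\boldsymbol\alpha=\sum_{i=0}^{p-1}\alpha_i|i\rangle\in\mathbb C^p$. For an integer $N\ge p$, the Fourier transform over $\mathbb Z_N$ of $\boldsymbol\alpha$ (viewed as a vector in $\mathbb C^N$ with zero entries at indices $\ge p$) is $\mathrm{FT}_N(\boldsymbol\alpha)=\sum_{c=0}^{N-1}\left(\frac{1}{\sqrt N}\sum_{i=0}^{p-1}\omega_N^{ic}\alpha_i\right)|c\rangle$. Write $\boldsymbol\beta=\sum_{i=0}^{p-1}\beta_i|i\rangle$ and $\boldsymbol\gamma=\sum_{i=0}^{q-1}\gamma_i|i\rangle$ with $q>p$. For $i\in[p]$ let $i'=\lfloor \frac{q}{p}i\rfloor$. Define the distributions on $[p]$: $\mathcal D_{\boldsymbol\beta}(i)=|\beta_i|^2$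 and $\mathcal D_{\boldsymbol\gamma}(i)=\frac{|\gamma_{i'}|^2}{\sum_{l\in[p]}|\gamma_{l'}|^2}$ (the distribution of $i$ obtained by measuring $\boldsymbol\gamma$ and conditioning on the outcome being of the form $i'$). *)

(* Defs.v *)
From HB Require Import structures.
From mathcomp Require Import all_boot all_order all_algebra.
From mathcomp Require Import complex.
From mathcomp Require Import reals trigo.
Set Implicit Arguments. Unset Strict Implicit. Unset Printing Implicit Defensive.
Import Order.TTheory GRing.Theory Num.Theory.
Local Open Scope ring_scope.
Local Open Scope complex_scope.

Section Defs.
Variable R : realType.

Definition omega (N : nat) : R[i] := cos (2 * pi / N%:R) +i* sin (2 * pi / N%:R).

Definition normsq (z : R[i]) : R := let: a +i* b := z in a ^+ 2 + b ^+ 2.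

(* c-th coordinate of FT_N(alpha), alpha in C^p padded with zeros *)
Definition FT (N p : nat) (alpha : 'I_p -> R[i]) (c : nat) : R[i] :=
  ((Num.sqrt (N%:R : R))^-1)%:C * \sum_(i < p) omega N ^+ (i * c) * alpha i.

Definition is_superposition (p : nat) (alpha : 'I_p -> R[i]) : Prop :=
  \sum_(i < p) normsq (alpha i) = 1.

Definition iprime (p q i : nat) : nat := (q * i %/ p)%N.

Definition D_beta (p : nat) (alpha : 'I_p -> R[i]) (i : nat) : R :=
  normsq (FT p alpha i).

Definition D_gamma (p q : nat) (alpha : 'I_p -> R[i]) (i : nat) : R :=
  normsq (FT q alpha (iprime p q i)) /
  \sum_(l < p) normsq (FT q alpha (iprime p q l)).

Definition L1dist (p q : nat) (alpha : 'I_p -> R[i]) : R :=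
  \sum_(i < p) `| D_beta alpha i - D_gamma q alpha i |.
End Defs.

(* Main.v *)
Require Import Defs.
From HB Require Import structures.
From mathcomp Require Import all_boot all_order all_algebra.
From mathcomp Require Import complex.
From mathcomp Require Import reals trigo.
From mathcomp Require Import ring lra zify.
From mathcomp Require Import classical_sets set_interval topology normedtype derive.
Import Order.TTheory GRing.Theory Num.Theory.
Import numFieldNormedType.Exports.
Local Open Scope ring_scope.

Section H1.
Local Open Scope complex_scope.
Variable R : realType.
Implicit Types z w : R[i].

Lemma normsq_ge0 z : 0 <= normsq z.
Proof. case: z => a b /=; apply: addr_ge0; exact: sqr_ge0. Qed.

Lemma normsqM z w : normsq (z * w) = normsq z * normsq w.
Proof. case: z => a b; case: w => c d /=; ring. Qed.

Lemma normsq1 : normsq (1 : R[i]) = 1.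
Proof. rewrite /=; ring. Qed.

Lemma normsqX z k : normsq (z ^+ k) = normsq z ^+ k.
Proof. elim: k => [|k IH]; first by rewrite !expr0 normsq1. by rewrite !exprS normsqM IH. Qed.

Lemma normsqRC (c : R) z : normsq (c%:C * z) = c ^+ 2 * normsq z.
Proof. case: z => a b /=; ring. Qed.

Lemma normsqE z : (normsq z)%:C = z * z^*.
Proof. case: z => a b /=. apply/eqP; rewrite eq_complex /=. apply/andP; split; apply/eqP; ring. Qed.

Lemma normsqB_sym z w : normsq (z - w) = normsq (w - z).
Proof. case: z => a b; case: w => c d /=; ring. Qed.

Lemma normsq_eq0 z : normsq z = 0 -> z = 0.
Proof.
case: z => a b /= H.
have ha : a ^+ 2 = 0 by apply/eqP; rewrite eq_le sqr_ge0 andbT -H lerDl sqr_ge0.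
have hb : b ^+ 2 = 0 by apply/eqP; rewrite eq_le sqr_ge0 andbT -H lerDr sqr_ge0.
move/eqP: ha; rewrite sqrf_eq0 => /eqP ->; move/eqP: hb; rewrite sqrf_eq0 => /eqP -> //.
Qed.

Lemma normsq_diff_bound z w (e : R) : 0 < e ->
  `|normsq w - normsq z| <= normsq (w - z) * (1 + e^-1) + e * normsq z.
Proof.
move=> e0; case: z => a b; case: w => c d /=.
set x := c - a; set y := d - b.
have -> : c = a + x by rewrite /x; ring.
have -> : d = b + y by rewrite /y; ring.
have key : `|2 * (a * x + b * y)| <= e * (a^+2 + b^+2) + (x^+2 + y^+2) / e.
  have ei : e^-1 * e = 1 by rewrite mulVf // gt_eqF.
  have h1 : 0 <= (e * a - x) ^+ 2 + (e * b - y) ^+ 2 by apply: addr_ge0; apply: sqr_ge0.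
  have h2 : 0 <= (e * a + x) ^+ 2 + (e * b + y) ^+ 2 by apply: addr_ge0; apply: sqr_ge0.
  have h1' : 0 <= e^-1 * ((e * a - x) ^+ 2 + (e * b - y) ^+ 2) by apply: mulr_ge0 => //; rewrite invr_ge0 ltW.
  have h2' : 0 <= e^-1 * ((e * a + x) ^+ 2 + (e * b + y) ^+ 2) by apply: mulr_ge0 => //; rewrite invr_ge0 ltW.
  have E1 : e * (a ^+ 2 + b ^+ 2) + (x ^+ 2 + y ^+ 2) / e + 2 * (a * x + b * y) = e^-1 * ((e * a + x) ^+ 2 + (e * b + y) ^+ 2).
    field. by rewrite gt_eqF.
  have E2 : e * (a ^+ 2 + b ^+ 2) + (x ^+ 2 + y ^+ 2) / e - 2 * (a * x + b * y) = e^-1 * ((e * a - x) ^+ 2 + (e * b - y) ^+ 2).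
    field. by rewrite gt_eqF.
  rewrite ler_norml; apply/andP; split; lra.
have -> : (a + x) ^+ 2 + (b + y) ^+ 2 - (a ^+ 2 + b ^+ 2) = 2 * (a * x + b * y) + (x^+2 + y^+2) by ring.
apply: (le_trans (ler_normD _ _)).
have hx : `|x ^+ 2 + y ^+ 2| = x^+2 + y^+2 by apply: ger0_norm; apply: addr_ge0; apply: sqr_ge0.
rewrite hx. move: key. set N := x^+2 + y^+2. have -> : N * (1 + e^-1) = N + N / e by ring. lra.
Qed.

End H1.

Section H2.
Local Open Scope complex_scope.
Variable R : realType.
Implicit Types z w : R[i].

Lemma cs_step (a b x y l L Q : R) : 0 < l -> 0 <= L -> 0 <= Q ->
  x^+2 + y^+2 <= L * Q ->
  (a + x)^+2 + (b + y)^+2 <= (l + L) * ((a^+2 + b^+2) / l + Q).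
Proof.
move=> l0 L0 Q0 hB.
have lQ : 0 <= l * Q by apply: mulr_ge0 => //; apply: ltW.
have E : (l + L) * ((a^+2 + b^+2) / l + Q) = (a^+2+b^+2) + L * (a^+2+b^+2) / l + l * Q + L * Q.
  field; by rewrite gt_eqF.
rewrite E.
have [L0'|Lp] := eqVneq L 0.
  subst L. have hx : x^+2 + y^+2 = 0.
    apply/eqP; rewrite eq_le; rewrite mul0r in hB; rewrite hB /=; apply: addr_ge0; apply: sqr_ge0.
  have x0 : x = 0.
    apply/eqP; rewrite -sqrf_eq0 eq_le sqr_ge0 andbT -hx lerDl sqr_ge0 //.
  have y0 : y = 0.
    apply/eqP; rewrite -sqrf_eq0 eq_le sqr_ge0 andbT -hx lerDr sqr_ge0 //.
  subst x y. rewrite !addr0 !mul0r. have : 0 <= l * Q by []. have : 0 <= a^+2 by apply: sqr_ge0. have : 0 <= b^+2 by apply: sqr_ge0. lra.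
have Lpos : 0 < L by rewrite lt_def Lp L0.
have key : 2 * (a * x + b * y) <= L * (a^+2 + b^+2) / l + l * Q.
  have h1 : 0 <= (l * L)^-1 * ((L * a - l * x) ^+ 2 + (L * b - l * y) ^+ 2).
    apply: mulr_ge0; last by apply: addr_ge0; apply: sqr_ge0.
    by rewrite invr_ge0; apply: mulr_ge0; apply: ltW.
  have E2 : (l * L)^-1 * ((L * a - l * x) ^+ 2 + (L * b - l * y) ^+ 2) =
     L * (a^+2 + b^+2) / l + l * (x^+2 + y^+2) / L - 2 * (a * x + b * y).
    field. by rewrite !gt_eqF.
  have h3 : l * (x^+2 + y^+2) / L <= l * Q.
    rewrite ler_pdivrMr // -mulrA ler_wpM2l //; [exact: ltW | by rewrite mulrC].
  lra.
lra.
Qed.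

Lemma normsq_sum_le (I : Type) (r : seq I) (lam : I -> R) (f : I -> R[i]) :
  (forall k, 0 < lam k) ->
  normsq (\sum_(k <- r) f k) <= (\sum_(k <- r) lam k) * \sum_(k <- r) normsq (f k) / lam k.
Proof.
move=> lp; elim: r => [|k r IH].
  by rewrite !big_nil /= mul0r; lra.
rewrite !big_cons.
have L0 : 0 <= \sum_(k <- r) lam k by apply: sumr_ge0 => i _; apply: ltW.
have Q0 : 0 <= \sum_(k <- r) normsq (f k) / lam k.
  apply: sumr_ge0 => i _; apply: divr_ge0; [exact: normsq_ge0| exact: ltW].
move: IH; case: (f k) => a b; case: (\sum_(k <- r) f k) => x y /= IH.
exact: cs_step.
Qed.

End H2.

Section H3.
Local Open Scope complex_scope.
Variable R : realType.
Implicit Types z w : R[i].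

Definition cis (t : R) : R[i] := cos t +i* sin t.

Lemma cisD s t : cis (s + t) = cis s * cis t.
Proof. rewrite /cis cosD sinD /=. congr (_ +i* _); ring. Qed.

Lemma cis0 : cis 0 = 1.
Proof. by rewrite /cis cos0 sin0. Qed.

Lemma cisX t k : cis t ^+ k = cis (k%:R * t).
Proof.
elim: k => [|k IH]; first by rewrite expr0 mul0r cis0.
by rewrite exprS IH -cisD -{1}(mul1r t) -mulrDl addrC -natr1.
Qed.

Lemma normsq_cis t : normsq (cis t) = 1.
Proof. by rewrite /cis /= cos2Dsin2. Qed.

Lemma omegaE N : @omega R N = cis (2 * pi / N%:R).
Proof. by []. Qed.

Lemma cis2pi : cis (2 * pi) = 1.
Proof. by rewrite /cis mulr_natl cos2pi sin2pi. Qed.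

Lemma sin_le_id {x : R} : 0 <= x -> sin x <= x.
Proof.
move=> x0; have [->|xp] := eqVneq x 0; first by rewrite sin0.
have x0' : 0 < x by rewrite lt_def xp x0.
have hd : forall y : R, y \in `]0, x[%R -> is_derive y 1 (@sin R) (cos y).
  by move=> y _; exact: is_derive_sin.
have hc : ({within `[0, x], continuous (@sin R)})%classic.
  by apply: continuous_subspaceT => y; exact: continuous_sin.
have [c _ E] := @MVT R sin cos 0 x x0' hd hc.
move: E; rewrite sin0 subr0 subr0 => ->.
by rewrite ler_piMl // cos_le1.
Qed.

Lemma one_sub_cos {x : R} : 0 <= x -> 1 - cos x <= x ^+ 2.
Proof.
move=> x0; have [->|xp] := eqVneq x 0; first by rewrite cos0 subrr expr0n /=.
have x0' : 0 < x by rewrite lt_def xp x0.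
have hd : forall y : R, y \in `]0, x[%R -> is_derive y 1 (@cos R) (- sin y).
  by move=> y _; exact: is_derive_cos.
have hc : ({within `[0, x], continuous (@cos R)})%classic.
  by apply: continuous_subspaceT => y; exact: continuous_cos.
have [c cI E] := @MVT R cos (fun y => - sin y) 0 x x0' hd hc.
move: cI; rewrite in_itv /= => /andP [c0 cx].
have : cos x - 1 = - sin c * x by rewrite -cos0 E subr0.
move=> E2.
have h1 := sin_le_id (ltW c0 : 0 <= c). have h : sin c <= x by lra.
have : 1 - cos x = sin c * x by rewrite -opprB E2 mulNr opprK.
move=> ->. rewrite expr2 ler_wpM2r //; exact: ltW.
Qed.

Lemma normsq_cis_sub1 (t : R) : 0 <= t -> normsq (cis t - 1) <= 2 * t ^+ 2.
Proof.
move=> t0; have h := one_sub_cos t0.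
have E : normsq (cis t - 1) = 2 * (1 - cos t).
  rewrite /cis /=. have := cos2Dsin2 t. rewrite /GRing.exp /=. move=> H. 
  rewrite !subr0 ?oppr0 ?addr0. nra.
rewrite E. lra.
Qed.

Lemma cis_neq1 (t : R) : 0 < t < 2 * pi -> cis t != 1.
Proof.
move=> /andP [t0 t2]; apply/negP => /eqP H.
have hs : sin t = 0 by move: H; rewrite /cis => -[].
have hc : cos t = 1 by move: H; rewrite /cis => -[].
have [tp|tp] := ltP t pi.
  have : 0 < sin t by apply: sin_gt0_pi; rewrite t0 tp.
  by rewrite hs ltxx.
have [te|tne] := eqVneq t pi.
  by move: hc; rewrite te cospi => hc; lra.
have tp' : pi < t by rewrite lt_def tne tp.
have : 0 < sin (t - pi).
  apply: sin_gt0_pi; rewrite subr_gt0 tp' /=. rewrite ltrBlDr. lra.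
have -> : sin (t - pi) = - sin t.
  by rewrite -[in RHS](subrK pi t) sinDpi opprK.
by rewrite hs oppr0 ltxx.
Qed.

End H3.

Section H4.
Local Open Scope complex_scope.
Variable R : realType.
Implicit Types z w : R[i].
Local Notation om := (@omega R).

Lemma omegaN N : (0 < N)%N -> om N ^+ N = 1.
Proof.
move=> N0; rewrite omegaE cisX.
have -> : N%:R * (2 * pi / N%:R) = 2 * pi :> R by field; rewrite pnatr_eq0 -lt0n.
exact: cis2pi.
Qed.

Lemma omega_neq1 N m : (0 < m)%N -> (m < N)%N -> om N ^+ m != 1.
Proof.
move=> m0 mN; rewrite omegaE cisX; apply: cis_neq1.
have N0 : (0:R) < N%:R by rewrite ltr0n; apply: leq_ltn_trans mN.
have m0' : (0:R) < m%:R by rewrite ltr0n.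
have mN' : (m%:R : R) < N%:R by rewrite ltr_nat.
have pi0 := @pi_gt0 R.
apply/andP; split.
  by apply: mulr_gt0 => //; apply: divr_gt0 => //; apply: mulr_gt0.
have -> : m%:R * (2 * pi / N%:R) = (2 * pi) * (m%:R / N%:R) :> R by rewrite mulrCA mulrA [_ * m%:R]mulrC mulrA.
rewrite gtr_pMr; last by apply: mulr_gt0.
by rewrite ltr_pdivrMr // mul1r.
Qed.

Lemma omega_mul a b : (0 < a)%N -> (0 < b)%N -> om (a * b) ^+ a = om b.
Proof.
move=> a0 b0; rewrite !omegaE cisX natrM.
congr cis; field; rewrite !pnatr_eq0 -!lt0n a0 b0 //.
Qed.

Lemma normsq_omX N k : normsq (om N ^+ k) = 1.
Proof. by rewrite normsqX omegaE normsq_cis expr1n. Qed.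

Lemma geom0 N z : z ^+ N = 1 -> z != 1 -> \sum_(i < N) z ^+ i = 0.
Proof.
move=> zN z1; have := subrX1 z N; rewrite zN subrr => /esym /eqP.
by rewrite mulf_eq0 subr_eq0 (negbTE z1) /= => /eqP.
Qed.

Lemma conj_om N : om N * (om N)^* = 1.
Proof. by rewrite -normsqE omegaE normsq_cis. Qed.

Lemma inner_sum N (j k : nat) : (0 < N)%N -> (j < N)%N -> (k < N)%N ->
  \sum_(i < N) (om N ^+ j * (om N)^* ^+ k) ^+ i = ((j == k)%:R * N%:R).
Proof.
move=> N0 jN kN; set w := om N; set w' := (om N)^*.
have ww : w * w' = 1 by exact: conj_om.
have wN : w ^+ N = 1 by exact: omegaN.
have w'N : w' ^+ N = 1 by rewrite /w' -rmorphXn /= -/w wN rmorph1.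
case: (ltngtP j k) => [jk|kj|->].
- have -> : w ^+ j * w' ^+ k = w' ^+ (k - j).
    rewrite [in w' ^+ k](_ : k = (k - j) + j)%N; last by rewrite subnK // ltnW.
    by rewrite exprD mulrCA -exprMn ww expr1n mulr1.
  rewrite (@geom0 N (w' ^+ (k - j))) ?mul0r //.
    by rewrite -exprM mulnC exprM w'N expr1n.
  apply/negP => /eqP H.
  have : w ^+ (k - j) == 1.
    by rewrite /w -(conjcK (om N)) -/w' -rmorphXn /= H rmorph1.
  have hn : w ^+ (k - j) != 1.
    by apply: omega_neq1; [rewrite subn_gt0 | exact: leq_ltn_trans (leq_subr _ _) kN].
  by rewrite (negbTE hn).
- have -> : w ^+ j * w' ^+ k = w ^+ (j - k).
    rewrite [in w ^+ j](_ : j = (j - k) + k)%N; last by rewrite subnK // ltnW.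
    by rewrite exprD -mulrA -exprMn ww expr1n mulr1.
  rewrite (@geom0 N (w ^+ (j - k))) ?mul0r //.
    by rewrite -exprM mulnC exprM wN expr1n.
  by apply: omega_neq1; [rewrite subn_gt0 | exact: leq_ltn_trans (leq_subr _ _) jN].
- rewrite -exprMn ww expr1n ?eqxx ?mul1r.
  under eq_bigr do rewrite expr1n.
  by rewrite sumr_const card_ord.
Qed.

Lemma parseval N (y : 'I_N -> R[i]) : (0 < N)%N ->
  \sum_(i < N) normsq (\sum_(j < N) om N ^+ (j * i) * y j) =
  N%:R * \sum_(j < N) normsq (y j).
Proof.
move=> N0; apply: complexI.
rewrite !rmorph_sum /= rmorphM /= rmorph_sum /=.
under eq_bigr do rewrite normsqE rmorph_sum /= big_distrl /=.
under eq_bigr do under eq_bigr do rewrite big_distrr /=.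
rewrite exchange_big /=.
under eq_bigr => j _ do rewrite exchange_big /=.
rewrite big_distrr /=.
apply: eq_bigr => j _.
rewrite (bigD1 j) //= [X in _ + X]big1 ?addr0; last first.
  move=> k kj.
  have -> : \sum_(i < N) om N ^+ (j * i) * y j * (om N ^+ (k * i) * y k)^*
      = y j * (y k)^* * \sum_(i < N) (om N ^+ j * (om N)^* ^+ k) ^+ i.
    rewrite big_distrr; apply: eq_bigr => i _.
    rewrite rmorphM /= rmorphXn /= exprMn -!exprM [(j * i)%N]mulnC [(k * i)%N]mulnC. ring.
  rewrite inner_sum //.
  have /negbTE -> : (j : nat) != k by rewrite eq_sym. by rewrite !mul0r mulr0.
have -> : \sum_(i < N) om N ^+ (j * i) * y j * (om N ^+ (j * i) * y j)^*
      = y j * (y j)^* * \sum_(i < N) (om N ^+ j * (om N)^* ^+ j) ^+ i.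
  rewrite big_distrr; apply: eq_bigr => i _.
  rewrite rmorphM /= rmorphXn /= exprMn -!exprM [(j * i)%N]mulnC. ring.
rewrite inner_sum // eqxx mul1r -normsqE.
by rewrite rmorph_nat mulrC.
Qed.

End H4.

Lemma nat_id (q P i j r i' : nat) : (0 < q)%N -> (q * i = i' * P + r)%N -> (r < P)%N ->
  (q * (j * i) + (q * P - r) * j = P * (j * i') + q * P * j)%N.
Proof. move=> h0 h1 h2. have h3 : (r <= q * P)%N by nia. nia. Qed.

Lemma bin_le_exp n m : ('C(n, m) <= n ^ m)%N.
Proof.
apply: leq_trans (_ : 'C(n, m) * m`! <= _)%N.
  by rewrite leq_pmulr // fact_gt0.
rewrite bin_ffact ffact_prod -[in X in (_ <= X)%N](card_ord m) -prod_nat_const.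
by apply: leq_prod => i _; rewrite leq_subr.
Qed.

Section H5.
Local Open Scope complex_scope.
Variable R : realType.
Implicit Types z w : R[i].
Local Notation om := (@omega R).

Lemma binom_expand (z : R[i]) (j P : nat) : (j < P)%N ->
  (z + 1) ^+ j - 1 = \sum_(k < P) z ^+ k.+1 *+ 'C(j, k.+1).
Proof.
move=> jP; rewrite exprD1n big_ord_recl /= expr0 bin0 mulr1n [1 + _]addrC addrK.
rewrite (big_ord_widen P (fun k => z ^+ k.+1 *+ 'C(j, k.+1)) (ltnW jP)) big_mkcond /=.
apply: eq_bigr => k _; case: ifP => // /negbT; rewrite -leqNgt => h.
by rewrite bin_small ?mulr0n // ltnS.
Qed.

Lemma geom_bound (x : R) (n : nat) : 0 <= x -> x <= 1/2 -> \sum_(k < n) x ^+ k.+1 <= 2 * x.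
Proof.
move=> x0 x2.
have E : (1 - x) * \sum_(k < n) x ^+ k = 1 - x ^+ n.
  have H := subrX1 x n. have -> : 1 - x ^+ n = - (x ^+ n - 1) by ring. rewrite H; ring.
have S0 : 0 <= \sum_(k < n) x ^+ k by apply: sumr_ge0 => k _; apply: exprn_ge0.
have xn : 0 <= x ^+ n by apply: exprn_ge0.
have S2 : \sum_(k < n) x ^+ k <= 2.
  have : (1 - x) * \sum_(k < n) x ^+ k <= 1 by rewrite E; lra.
  nra.
have -> : \sum_(k < n) x ^+ k.+1 = x * \sum_(k < n) x ^+ k.
  by rewrite big_distrr; apply: eq_bigr => k _; rewrite exprS.
nra.
Qed.


Lemma eps_bound (P q r : nat) : (0 < P)%N -> (0 < q)%N -> (r < P)%N ->
  normsq (om (q * P) ^+ (q * P - r) - 1) <= 8 * pi ^+ 2 / q%:R ^+ 2.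
Proof.
move=> P0 q0 rP.
set Om := om (q * P).
have OmP : Om ^+ (q * P) = 1 by apply: omegaN; rewrite muln_gt0 q0 P0.
have rqP : (r <= q * P)%N by apply: leq_trans (ltnW rP) _; rewrite leq_pmull.
have wv : Om ^+ (q * P - r) * Om ^+ r = 1 by rewrite -exprD subnK.
have E1 : normsq (Om ^+ (q * P - r) - 1) = normsq (Om ^+ r - 1).
  have -> : Om ^+ (q * P - r) - 1 = Om ^+ (q * P - r) * (1 - Om ^+ r) by rewrite mulrBr mulr1 wv.
  by rewrite normsqM normsq_omX mul1r normsqB_sym.
rewrite E1 subrX1 normsqM.
set th : R := 2 * pi / (q * P)%:R.
have pi0 := @pi_gt0 R.
have th0 : 0 <= th by apply: divr_ge0; [apply: mulr_ge0 => //; apply: ltW|apply: ler0n].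
have hA : normsq (Om - 1) <= 2 * th ^+ 2 by rewrite /Om omegaE; apply: normsq_cis_sub1.
have hB : normsq (\sum_(l < r) Om ^+ l) <= r%:R ^+ 2.
  have := @normsq_sum_le R _ (index_enum 'I_r) (fun _ => 1) (fun l : 'I_r => Om ^+ l) (fun _ => ltr01).
  move=> H; apply: le_trans H _.
  rewrite [X in _ * X](eq_bigr (fun _ => 1)); last by move=> l _; rewrite normsq_omX divr1.
  by rewrite sumr_const card_ord expr2.
have hB' : (r%:R : R) ^+ 2 <= P%:R ^+ 2.
  by rewrite ler_pXn2r ?nnegrE ?ler0n // ler_nat ltnW.
apply: le_trans (ler_pM (normsq_ge0 _ _) (normsq_ge0 _ _) hA (le_trans hB hB')) _.
rewrite /th natrM.
have -> : 2 * (2 * pi / (q%:R * P%:R)) ^+ 2 * P%:R ^+ 2 = 8 * pi ^+ 2 / q%:R ^+ 2 :> R.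
  field. by rewrite !pnatr_eq0 -!lt0n P0 q0.
by [].
Qed.


Lemma diff_expand (P q : nat) (alpha : 'I_P -> R[i]) (i : nat) : (0 < P)%N -> (0 < q)%N ->
  \sum_(j < P) om q ^+ (j * iprime P q i) * alpha j - \sum_(j < P) om P ^+ (j * i) * alpha j
  = \sum_(k < P) (om (q * P) ^+ (q * P - (q * i) %% P) - 1) ^+ k.+1 *
      \sum_(j < P) om P ^+ (j * i) * ('C(j, k.+1)%:R * alpha j).
Proof.
move=> P0 q0.
set eps := om (q * P) ^+ (q * P - (q * i) %% P) - 1.
set Om := om (q * P).
have hP : om P = Om ^+ q by rewrite /Om omega_mul.
have hq : om q = Om ^+ P by rewrite /Om mulnC omega_mul.
have OmP : Om ^+ (q * P) = 1 by apply: omegaN; rewrite muln_gt0 q0 P0.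
have key : forall j : nat, om q ^+ (j * iprime P q i) = om P ^+ (j * i) * (eps + 1) ^+ j.
  move=> j; rewrite /eps subrK hq hP -!exprM -exprD.
  rewrite (@nat_id q P i j ((q * i) %% P) (iprime P q i)) //; last by rewrite ltn_pmod.
    by rewrite exprD [Om ^+ (q * P * j)]exprM OmP expr1n mulr1.
  by rewrite /iprime -divn_eq.
rewrite -sumrB; apply/esym.
under eq_bigr => k _ do rewrite big_distrr /=.
rewrite exchange_big /=.
apply: eq_bigr => j _; apply/esym.
rewrite key.
transitivity (om P ^+ (j * i) * ((eps + 1) ^+ j - 1) * alpha j); first by ring.
rewrite (@binom_expand eps j P (ltn_ord j)) big_distrr big_distrl /=.
apply: eq_bigr => k _.
rewrite -mulr_natr; ring.
Qed.


Lemma aux_pow (a b c : R) n : a ^+ n / b ^+ n * (c * (c ^+ n) ^+ 2) = c * (a * c ^+ 2 / b) ^+ n.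
Proof. rewrite !exprMn exprVn [(c ^+ n) ^+ 2]expr2. ring. Qed.

Lemma S_bound (P : nat) (alpha : 'I_P -> R[i]) (k : nat) : (0 < P)%N ->
  \sum_(j < P) normsq (alpha j) = 1 ->
  \sum_(i < P) normsq (\sum_(j < P) om P ^+ (j * i) * ('C(j, k.+1)%:R * alpha j))
    <= P%:R * (P%:R ^+ k.+1) ^+ 2.
Proof.
move=> P0 Ha; rewrite parseval // ler_wpM2l ?ler0n //.
apply: le_trans (_ : _ <= \sum_(j < P) (P%:R ^+ k.+1) ^+ 2 * normsq (alpha j)) _; last first.
  by rewrite -big_distrr /= Ha mulr1.
apply: ler_sum => j _.
have -> : ('C(j, k.+1)%:R : R[i]) = ('C(j, k.+1)%:R : R)%:C by rewrite rmorph_nat.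
rewrite normsqRC ler_wpM2r ?normsq_ge0 //.
rewrite ler_pXn2r ?nnegrE ?ler0n ?exprn_ge0 // -natrX ler_nat.
apply: leq_trans (bin_le_exp _ _) _.
by rewrite leq_exp2r // ltnW.
Qed.

Lemma core (P q : nat) (alpha : 'I_P -> R[i]) : (0 < P)%N -> (0 < q)%N ->
  \sum_(j < P) normsq (alpha j) = 1 ->
  16 * P%:R / q%:R <= 1 / 2 :> R ->
  \sum_(i < P) normsq (\sum_(j < P) om q ^+ (j * iprime P q i) * alpha j
                       - \sum_(j < P) om P ^+ (j * i) * alpha j)
    <= 4 * (16 * P%:R / q%:R) ^+ 2 * P%:R.
Proof.
move=> P0 q0 Ha hx.
set x : R := 16 * P%:R / q%:R.
set e : R := 8 * pi ^+ 2 / q%:R ^+ 2.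
have Pr0 : (0 : R) < P%:R by rewrite ltr0n.
have qr0 : (0 : R) < q%:R by rewrite ltr0n.
have x0 : 0 < x by rewrite /x; apply: divr_gt0 => //; apply: mulr_gt0.
have e0 : 0 <= e by rewrite /e; apply: divr_ge0; [apply: mulr_ge0 => //; apply: exprn_ge0; apply: ltW; exact: pi_gt0 | apply: exprn_ge0; apply: ltW].
have pi4 : (pi : R) < 4 by have := @pihalf_lt2 R; lra.
have pi0 := @pi_gt0 R.
have eP : e * P%:R ^+ 2 <= x ^+ 2.
  rewrite /e /x.
  have -> : 8 * pi ^+ 2 / q%:R ^+ 2 * P%:R ^+ 2 = (8 * pi ^+ 2) * (P%:R / q%:R) ^+ 2 :> R.
    field; by rewrite gt_eqF.
  have -> : (16 * P%:R / q%:R) ^+ 2 = 256 * (P%:R / q%:R) ^+ 2 :> R.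
    field; by rewrite gt_eqF.
  apply: ler_wpM2r; first by apply: exprn_ge0; apply: ltW; apply: divr_gt0.
  rewrite -subr_ge0; nra.
set A := \sum_(k < P) x ^+ k.+1.
have A0 : 0 <= A by apply: sumr_ge0 => k _; apply: exprn_ge0; apply: ltW.
have A2 : A <= 2 * x by apply: geom_bound => //; apply: ltW.
set S := fun (k : nat) (i : nat) => \sum_(j < P) om P ^+ (j * i) * ('C(j, k.+1)%:R * alpha j).
have step1 : forall i : 'I_P,
    normsq (\sum_(j < P) om q ^+ (j * iprime P q i) * alpha j
                       - \sum_(j < P) om P ^+ (j * i) * alpha j)
    <= A * \sum_(k < P) e ^+ k.+1 / x ^+ k.+1 * normsq (S k i).
  move=> i; rewrite diff_expand //.
  apply: le_trans (@normsq_sum_le R _ (index_enum 'I_P) (fun k : 'I_P => x ^+ k.+1) _ _) _.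
    by move=> k; apply: exprn_gt0.
  rewrite ler_wpM2l //; apply: ler_sum => k _.
  rewrite normsqM normsqX mulrC mulrA.
  apply: ler_wpM2r; first exact: normsq_ge0.
  rewrite [X in X <= _]mulrC; apply: ler_wpM2r; first by rewrite invr_ge0 exprn_ge0 // ltW.
  rewrite ler_pXn2r ?nnegrE ?normsq_ge0 //.
  by apply: eps_bound => //; rewrite ltn_pmod.
apply: le_trans (ler_sum _ (fun i _ => step1 i)) _.
rewrite -big_distrr /= exchange_big /=.
have step2 : \sum_(k < P) \sum_(i < P) e ^+ k.+1 / x ^+ k.+1 * normsq (S k i)
    <= P%:R * A.
  rewrite /A big_distrr /=; apply: ler_sum => k _.
  rewrite -big_distrr /=.
  apply: le_trans (ler_wpM2l _ (@S_bound P alpha k P0 Ha)) _.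
    by apply: divr_ge0; apply: exprn_ge0 => //; apply: ltW.
  have -> : e ^+ k.+1 / x ^+ k.+1 * (P%:R * (P%:R ^+ k.+1) ^+ 2)
      = P%:R * (e * P%:R ^+ 2 / x) ^+ k.+1.
    exact: aux_pow.
  rewrite ler_wpM2l ?ler0n // ler_pXn2r ?nnegrE //.
  - by rewrite ler_pdivrMr // -expr2.
  - by apply: divr_ge0; [apply: mulr_ge0 => //; apply: exprn_ge0; apply: ltW| apply: ltW].
  - exact: ltW.
apply: le_trans (ler_wpM2l A0 step2) _.
have : A * (P%:R * A) <= (2 * x) * (P%:R * (2 * x)).
  apply: ler_pM => //; first by apply: mulr_ge0 => //; apply: ltW.
  by apply: ler_wpM2l => //; apply: ltW.
move=> H; apply: le_trans H _. have -> : 2 * x * (P%:R * (2 * x)) = 4 * x ^+ 2 * P%:R by ring. by [].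
Qed.

End H5.

Section H6.
Local Open Scope complex_scope.
Variable R : realType.

Lemma final_ineq (N : nat) (B G c : 'I_N -> R) (P C : R) :
  0 < P -> (forall i, 0 <= B i) -> (forall i, 0 <= G i) -> \sum_i B i = P ->
  (forall i, `|G i - B i| <= c i) -> \sum_i c i <= C ->
  \sum_i `|B i / P - G i / \sum_l G l| <= 2 * C / P.
Proof.
move=> P0 B0 G0 SB hc SC.
have Sdiff : `|\sum_i G i - P| <= C.
  rewrite -SB -sumrB; apply: le_trans (ler_norm_sum _ _ _) _.
  by apply: le_trans SC; apply: ler_sum => i _.
have SGi : 0 <= \sum_l G l by apply: sumr_ge0.
have SCi : \sum_i `|G i - B i| <= C.
  by apply: le_trans SC; apply: ler_sum => i _.
have Pi : 0 < P^-1 by rewrite invr_gt0.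
have [SG0|SGp] := eqVneq (\sum_l G l) 0.
  rewrite SG0 invr0.
  under eq_bigr do rewrite mulr0 subr0 normrM (ger0_norm (B0 _)) (gtr0_norm Pi).
  rewrite -big_distrl /= SB mulfV ?gt_eqF //.
  move: Sdiff; rewrite SG0 sub0r normrN (gtr0_norm P0) => HC.
  rewrite ler_pdivlMr //. lra.
set T := \sum_l G l.
have T0 : 0 < T by rewrite lt_def SGp SGi.
have step : forall i, `|B i / P - G i / T| <= `|G i - B i| / P + G i * `|P^-1 - T^-1|.
  move=> i.
  have -> : B i / P - G i / T = - ((G i - B i) / P) + G i * (P^-1 - T^-1).
    by field; rewrite !gt_eqF.
  apply: le_trans (ler_normD _ _) _.
  by rewrite normrN normrM (gtr0_norm Pi) normrM (ger0_norm (G0 _)).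
apply: le_trans (ler_sum _ (fun i _ => step i)) _.
rewrite big_split /= -big_distrl -big_distrl /= -/T.
have -> : T * `|P^-1 - T^-1| = `|T - P| / P.
  rewrite -(ger0_norm (ltW T0)) -normrM -[in RHS](gtr0_norm Pi) -normrM (ger0_norm (ltW T0)).
  congr `|_|; field; rewrite !gt_eqF //.
have h1 : (\sum_i `|G i - B i|) / P <= C / P by rewrite ler_pM2r.
have h2 : `|T - P| / P <= C / P by rewrite ler_pM2r.
have -> : 2 * C / P = C / P + C / P by field; rewrite gt_eqF.
exact: lerD.
Qed.
End H6.

Lemma FT_normsq (R : realType) N p (alpha : 'I_p -> R[i]) c : (0 < N)%N ->
  normsq (FT N alpha c) = normsq (\sum_(i < p) omega R N ^+ (i * c) * alpha i) / N%:R.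
Proof.
move=> N0; rewrite /FT normsqRC exprVn sqr_sqrtr ?ler0n // mulrC.
by [].
Qed.

Lemma arith (R : realType) (x S P eta : R) : 0 < S -> 0 < P -> 0 <= x -> x * (12 * (S + 1)) <= 1 ->
  eta = (6 * (S + 1))^-1 ->
  2 * (4 * x ^+ 2 * P * (1 + eta^-1) + eta * P) / P <= S^-1.
Proof.
move=> S0 P0 x0 hx ->; clear eta.
set eta := (6 * (S + 1))^-1.
have S1 : 0 < 6 * (S + 1) by lra.
have e0 : 0 < eta by rewrite invr_gt0.
have ee : eta * (6 * (S + 1)) = 1 by rewrite mulVf // gt_eqF.
have -> : 2 * (4 * x ^+ 2 * P * (1 + eta^-1) + eta * P) / P = 2 * (4 * x ^+ 2 * (1 + eta^-1) + eta).
  by field; rewrite !gt_eqF.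
have xe : 2 * x <= eta.
  have h : 2 * x * (6 * (S + 1)) <= eta * (6 * (S + 1)) by rewrite ee; lra.
  by move: h; rewrite ler_pM2r.
have h4 : 4 * x ^+ 2 <= eta ^+ 2.
  have -> : 4 * x ^+ 2 = (2 * x) ^+ 2 by ring.
  rewrite ler_pXn2r ?nnegrE //; lra.
have h5 : 4 * x ^+ 2 * eta^-1 <= eta.
  by rewrite ler_pdivrMr // -expr2.
have h6 : eta <= 1 / 6.
  have : eta * (6 * (S + 1)) <= 1 / 6 * (6 * (S + 1)) by rewrite ee; lra.
  by rewrite ler_pM2r.
have hS : 6 * eta = (S + 1)^-1.
  rewrite /eta invfM mulrA mulfV ?mul1r //.
  by rewrite pnatr_eq0.
have hS2 : (S + 1)^-1 <= S^-1 by rewrite lef_pV2 ?posrE; lra.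
have h7 : eta ^+ 2 <= eta / 6.
  rewrite expr2; apply: ler_wpM2l; lra.
have : 4 * x ^+ 2 * (1 + eta^-1) = 4 * x ^+ 2 + 4 * x ^+ 2 * eta^-1 by ring.
lra.
Qed.

Theorem theorem1 (R : realType) (p : nat -> nat) :
  (forall n, (0 < p n)%N) ->
  (exists k C : nat, forall n, (p n <= C * 2 ^ (n ^ k))%N) ->
  forall s : {poly R}, (forall n : nat, 0 < s.[n%:R]) ->
  exists t : {poly R}, forall n q : nat,
    t.[n%:R] * (p n)%:R <= q%:R ->
    forall alpha : 'I_(p n) -> R[i], is_superposition alpha ->
      L1dist q alpha <= (s.[n%:R])^-1.
Proof.
move=> hp _ s spos.
exists (192%:P * (s + 1)).
move=> n q ht alpha Ha.
move: alpha Ha; rewrite /L1dist /D_beta /D_gamma.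
have P0 := hp n.
move: ht P0; set P := p n => ht P0 alpha Ha.
set S := s.[n%:R].
have S0 : 0 < S := spos n.
rewrite hornerM hornerC hornerD hornerC -/S in ht.
have Pr : (0 : R) < P%:R by rewrite ltr0n.
have qge : 192 * P%:R <= q%:R :> R.
  apply: le_trans ht; rewrite ler_pM2r //; lra.
have qr : (0 : R) < q%:R by apply: lt_le_trans qge; lra.
have q0 : (0 < q)%N by rewrite -(ltr0n R).
set x : R := 16 * P%:R / q%:R.
have x0 : 0 <= x by rewrite /x; apply: divr_ge0; [lra | apply: ltW].
have hx : x * (12 * (S + 1)) <= 1.
  rewrite /x mulrAC ler_pdivrMr // mul1r.
  apply: le_trans ht. have -> : 16 * P%:R * (12 * (S + 1)) = 192 * (S + 1) * P%:R :> R by ring. by [].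
have hx2 : x <= 1 / 2.
  have : x * 12 <= 1 by nra.
  lra.
have Hcore := @core R P q alpha P0 q0 Ha hx2.
set b := fun i : nat => \sum_(j < P) omega R P ^+ (j * i) * alpha j.
set g := fun i : nat => \sum_(j < P) omega R q ^+ (j * iprime P q i) * alpha j.
set B := fun i : 'I_P => normsq (b i).
set G := fun i : 'I_P => normsq (g i).
have SB : \sum_i B i = P%:R.
  by rewrite /B /b parseval // Ha mulr1.
set eta : R := (6 * (S + 1))^-1.
have eta0 : 0 < eta by rewrite invr_gt0; lra.
have E : forall i : 'I_P,
   `|normsq (FT P alpha i) -
     normsq (FT q alpha (iprime P q i)) /
       (\sum_(l < P) normsq (FT q alpha (iprime P q l)))|
   = `|B i / P%:R - G i / \sum_l G l|.
  move=> i; rewrite !FT_normsq //.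
  rewrite [\sum_(l < P) normsq (FT _ _ _)](eq_bigr (fun l : 'I_P => G l / q%:R)); last by move=> l _; rewrite FT_normsq.
  rewrite -big_distrl /= invf_div mulrA divfK ?gt_eqF //.
rewrite (eq_bigr _ (fun i _ => E i)).
apply: le_trans (@final_ineq R P B G (fun i => normsq (g i - b i) * (1 + eta^-1) + eta * B i)
   P%:R (4 * x ^+ 2 * P%:R * (1 + eta^-1) + eta * P%:R) Pr _ _ SB _ _) _.
- by move=> i; exact: normsq_ge0.
- by move=> i; exact: normsq_ge0.
- by move=> i; apply: normsq_diff_bound.
- rewrite big_split /= -big_distrl -big_distrr /= SB.
  rewrite lerD2r ler_wpM2r //; first by apply: addr_ge0; [lra| apply: ltW; rewrite invr_gt0].
- exact: arith.
Qed.
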